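(* Let $p$ be a prime and let $\alpha\in\mathbf{Bad}$ with $\alpha>0$. Then $\alpha$ satisfies the $p$-adic Littlewood Conjecture, i.e. $m_p(\alpha)=0$, if and only if there is a sequence of natural numbers $\{\ell_m\}_{m\in\mathbb{N}}$ such that, for every $m\in\mathbb{N}$, the number $p^{\ell_m}\alpha$ is not an infinite loop mod $p^m$.
   Context: For $\alpha\in\mathbb{R}$ write its simple continued fraction $[a_0;a_1,a_2,\ldots]$ with $a_0\in\mathbb{Z}$, $a_i\in\mathbb{N}$ for $i\ge1$. Convergents $p_k/q_k=[a_0;a_1,\ldots,a_k]$ are given by $p_{-1}=1,q_{-1}=0,p_0=a_0,q_0=1$, $p_k=a_kp_{k-1}+p_{k-2}$, $q_k=a_kq_{k-1}+q_{k-2}$. For $0\le m\le a_{k+1}$ the $\{k,m\}$-th semi-convergent is $p_{\{k,m\}}/q_{\{k,m\}}=(mp_k+p_{k-1})/(mq_k+q_{k-1})=[a_0;a_1,\ldots,a_k,m]$. For $n\in\mathbb{N}$, a real number $\alpha>0$ is an \emph{infinite loop mod $n$} if none of its semi-convergent denominators $q_{\{k,m\}}$ is divisible by $n$, except $q_{-1}=0$. (For rational $\alpha$ both finite expansions are considered and the expansion is regarded as ending with a partial quotient equal to $\infty$, so that after the last convergent all $m\ge0$ are allowed.) $\|x\|$ denotes the distance from $x$ to the nearest integer, $|\cdot|_p$ the $p$-adic absolute value, $m_p(\alpha)=\inf_{q\in\mathbb{N}} q\,|q|_p\,\|q\alpha\|$, and the $p$-adic Littlewood Conjecture for $\alpha$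 is the statement $m_p(\alpha)=0$. $\mathbf{Bad}=\{\alpha\in\mathbb{R}: \inf_{q\in\mathbb{N}} q\|q\alpha\|>0\}$, equivalently the irrationals with bounded partial quotients. *)

(* Defs.v *)
From HB Require Import structures.
From mathcomp Require Import all_boot all_order all_algebra.
From mathcomp Require Import all_classical all_reals.
Set Implicit Arguments. Unset Strict Implicit. Unset Printing Implicit Defensive.
Import Order.TTheory GRing.Theory Num.Theory.
Local Open Scope ring_scope.
Local Open Scope classical_set_scope.

Section CF.
Variable R : realType.

(* Complete quotients of the (Gauss-map) continued fraction algorithm:
   alpha_0 = alpha, alpha_{k+1} = 1 / (alpha_k - floor alpha_k). *)
Fixpoint cf_rem (alpha : R) (k : nat) : R :=
  match k with
  | 0 => alpha
  | k'.+1 => (cf_rem alpha k' - (Num.floor (cf_rem alpha k'))%:~R)^-1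
  end.

Definition cf_a (alpha : R) (k : nat) : int := Num.floor (cf_rem alpha k).

(* shifted denominators: cf_qs alpha (k+1) = q_k, cf_qs alpha 0 = q_{-1} = 0 *)
Fixpoint cf_qs (alpha : R) (j : nat) : int :=
  match j with
  | 0 => 0
  | 1 => 1
  | (j'.+1 as j1).+1 => cf_a alpha j1 * cf_qs alpha j1 + cf_qs alpha j'
  end.

Definition cf_q (alpha : R) (k : nat) : int := cf_qs alpha k.+1.

(* q_{k,m} = m q_k + q_{k-1} *)
Definition semiconv_den (alpha : R) (k m : nat) : int :=
  m%:Z * cf_qs alpha k.+1 + cf_qs alpha k.

(* alpha is an infinite loop mod n: no semi-convergent denominator q_{k,m}
   (k >= 0, 0 <= m <= a_{k+1}) is divisible by n, except q_{0,0} = q_{-1} = 0. *)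
Definition infinite_loop (n : nat) (alpha : R) : Prop :=
  forall k m : nat, (m%:Z <= cf_a alpha k.+1) -> (k, m) <> (0%N, 0%N) ->
    ~ (n%:Z %| semiconv_den alpha k m)%Z.

Definition dist_int (x : R) : R :=
  Num.min (x - (Num.floor x)%:~R) ((Num.floor x)%:~R + 1 - x).

Definition padic_abs (p q : nat) : R := (p%:R) ^- (logn p q).

Definition m_p (p : nat) (alpha : R) : R :=
  inf [set (q%:R * padic_abs p q * dist_int (q%:R * alpha)) | q in [set q : nat | (0 < q)%N]].

Definition Bad : set R :=
  [set alpha | 0 < inf [set (q%:R * dist_int (q%:R * alpha)) | q in [set q : nat | (0 < q)%N]]].

End CF.

(* Main.v *)
Require Import Defs.
From HB Require Import structures.
From mathcomp Require Import all_boot all_order all_algebra.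
From mathcomp Require Import all_classical all_reals.
From mathcomp Require Import zify ring lra.
Import Order.TTheory GRing.Theory Num.Theory.
Local Open Scope ring_scope.
Local Open Scope classical_set_scope.
Set Implicit Arguments. Unset Strict Implicit.

Section Dist.
Variable R : realType.
Implicit Types x : R.

Lemma dist_ge0 x : 0 <= dist_int x.
Proof.
rewrite /dist_int; have := floor_itv x; rewrite intrD => /andP[h1 h2].
rewrite le_min; apply/andP; split; lra.
Qed.

Lemma dist_le x (z : int) : dist_int x <= `|x - z%:~R|.
Proof.
rewrite /dist_int; have := floor_itv x; rewrite intrD => /andP[h1 h2].
case: (lerP z (Num.floor x)) => hz.
- rewrite ge_min; apply/orP; left.
  have : (z%:~R : R) <= (Num.floor x)%:~R by rewrite ler_int.
  move=> h; rewrite ger0_norm; lra.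
- rewrite ge_min; apply/orP; right.
  have : ((Num.floor x) + 1)%:~R <= (z%:~R : R) by rewrite ler_int; lia.
  rewrite intrD => h; rewrite ler0_norm; lra.
Qed.

Lemma dist_eq x : 0 <= x -> exists a : nat, dist_int x = `|x - a%:R|.
Proof.
move=> x0; rewrite /dist_int; have := floor_itv x; rewrite intrD => /andP[h1 h2].
have f0 : 0 <= Num.floor x by rewrite floor_ge0.
case: (Num.floor x) f0 h1 h2 => [n|n] // _ h1 h2.
case: (lerP (x - n%:R) (n%:R + 1 - x)) => h.
- exists n; rewrite ger0_norm; lra.
- exists n.+1; rewrite -natr1 ler0_norm; lra.
Qed.

End Dist.

Fixpoint cf_ps (R : realType) (alpha : R) (j : nat) : int :=
  match j with
  | 0 => 1
  | 1 => cf_a alpha 0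
  | (j'.+1 as j1).+1 => cf_a alpha j1 * cf_ps alpha j1 + cf_ps alpha j'
  end.

Section CFT.
Variable R : realType.
Variable beta : R.
Local Notation r := (cf_rem beta).
Local Notation a := (cf_a beta).
Local Notation Q := (cf_qs beta).
Local Notation P := (cf_ps beta).

Definition NI n := (a n)%:~R != r n.
Definition pre n := forall j, (j < n)%N -> NI j.

Lemma frac_bd n : 0 <= r n - (a n)%:~R < 1.
Proof.
have := floor_itv (r n); rewrite intrD /cf_a => /andP[h1 h2].
apply/andP; split; lra.
Qed.

Lemma rem_ge0 n : 0 <= r n.+1.
Proof. rewrite /= invr_ge0; have /andP[h _] := frac_bd n; exact: h. Qed.

Lemma a_ge0 n : 0 <= a n.+1.
Proof. by rewrite /cf_a floor_ge0 rem_ge0. Qed.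

Lemma remM n : NI n -> r n.+1 * (r n - (a n)%:~R) = 1.
Proof.
move=> hn; rewrite /= mulVf //; rewrite subr_eq0; apply/eqP => e.
by move: hn; rewrite /NI e eqxx.
Qed.

Lemma rem_gt1 n : NI n -> 1 < r n.+1.
Proof.
move=> hn; have /andP[h1 h2] := frac_bd n.
have hpos : 0 < r n - (a n)%:~R.
  rewrite lt_neqAle h1 andbT eq_sym subr_eq0; by move: hn; rewrite /NI eq_sym.
rewrite /= -[X in X < _]invr1 ltf_pV2 ?posrE //.
Qed.

Lemma a_ge1 n : NI n -> 1 <= a n.+1.
Proof.
move=> hn; rewrite /cf_a floor_ge_int; have := rem_gt1 hn; lra.
Qed.

Lemma Qge n : pre n -> 1 <= Q n.+1 /\ 0 <= Q n.
Proof.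
elim: n => [|n IH] hp; first by [].
have [h1 h0] : 1 <= Q n.+1 /\ 0 <= Q n by apply: IH => j hj; apply: hp; lia.
have ha := a_ge1 (hp n (ltnSn n)).
split; last lia.
change (1 <= a n.+1 * Q n.+1 + Q n); nia.
Qed.

Lemma Sid n : pre n.+1 ->
  beta * ((Q n.+1)%:~R * r n.+1 + (Q n)%:~R) = (P n.+1)%:~R * r n.+1 + (P n)%:~R.
Proof.
elim: n => [|n IH] hp.
  have h := remM (hp 0%N isT); rewrite /=.
  change (r 1 * (beta - (a 0)%:~R) = 1) in h.
  change (beta * ((1:int)%:~R * r 1 + (0:int)%:~R) = (a 0)%:~R * r 1 + (1:int)%:~R).
  have -> : ((1:int)%:~R : R) = 1 by [].
  have -> : ((0:int)%:~R : R) = 0 by [].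
  lra.
have IH' := IH (fun j hj => hp j (ltnW hj)).
have h := remM (hp n.+1 (ltnSn _)).
set r1 := r n.+1 in IH' h *; set r2 := r n.+2 in h *.
change (Q n.+2) with (a n.+1 * Q n.+1 + Q n).
change (P n.+2) with (a n.+1 * P n.+1 + P n).
rewrite !intrD !intrM.
set q1 := (Q n.+1)%:~R in IH' *; set q0 := (Q n)%:~R in IH' *.
set p1 := (P n.+1)%:~R in IH' *; set p0 := (P n)%:~R in IH' *.
set A := (a n.+1)%:~R in h *.
apply/eqP; rewrite -subr_eq0; apply/eqP.
have -> : beta * ((A * q1 + q0) * r2 + q1) - ((A * p1 + p0) * r2 + p1)
  = r2 * (beta * (q1 * r1 + q0) - (p1 * r1 + p0))
    - (beta * q1 - p1) * (r2 * (r1 - A) - 1) by ring.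
by rewrite IH' h !subrr mulr0 mulr0 subrr.
Qed.

Lemma det n : Q n.+1 * P n - P n.+1 * Q n = (-1) ^+ n.
Proof.
elim: n => [|n IH]; first by rewrite /= mul1r mulr0 subr0.
rewrite exprS -IH [Q n.+2]/= [P n.+2]/=; ring.
Qed.

Definition E n : R := (Q n)%:~R * beta - (P n)%:~R.

Lemma E_rel n : pre n.+1 -> E n = - r n.+1 * E n.+1.
Proof.
move=> hp; have h := Sid hp; rewrite /E.
apply/eqP; rewrite -subr_eq0; apply/eqP.
rewrite -[RHS](subrr (beta * ((Q n.+1)%:~R * r n.+1 + (Q n)%:~R))).
rewrite {2}h; ring.
Qed.

Lemma E_det n : pre n.+1 ->
  ((Q n.+1)%:~R * r n.+1 + (Q n)%:~R) * E n.+1 = ((-1) ^+ n : int)%:~R.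
Proof.
move=> hp; have h := Sid hp; rewrite -det /E intrD !intrM.
apply/eqP; rewrite -subr_eq0; apply/eqP.
transitivity ((Q n.+1)%:~R * (beta * ((Q n.+1)%:~R * r n.+1 + (Q n)%:~R)
   - ((P n.+1)%:~R * r n.+1 + (P n)%:~R)) : R); first ring.
by rewrite h subrr mulr0.
Qed.


Hypothesis Hb : forall q : nat, (0 < q)%N -> 0 < dist_int (q%:R * beta).

Lemma allpre n : pre n.
Proof.
elim: n => [|n IH]; first by move=> j.
suff hn : NI n by move=> j; rewrite ltnS leq_eqVlt => /orP[/eqP->//|]; apply: IH.
rewrite /NI; apply/negP => /eqP e.
case: n IH e => [|n] IH e.
  have := Hb (isT : (0 < 1)%N); rewrite mul1r.
  have := dist_le beta (a 0); rewrite [X in `|_ - X|]e subrr normr0.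
  change (cf_rem beta 0) with beta; lra.
have hS := Sid IH; rewrite -e in hS.
have [h1 h0] := Qge (fun j (hj : (j < n)%N) => IH j (ltnW hj)).
have ha := a_ge1 (IH n (ltnSn _)).
have hD : 1 <= Q n.+1 * a n.+1 + Q n by nia.
case hDe : (Q n.+1 * a n.+1 + Q n) hD => [d|d] // hd.
have hd' : (0 < d)%N.
  by move: hd; rewrite lez_nat.
have := Hb hd'.
have -> : (d%:R : R) = (Q n.+1)%:~R * (a n.+1)%:~R + (Q n)%:~R.
  by rewrite -intrM -intrD hDe.
rewrite mulrC hS.
have := dist_le ((P n.+1)%:~R * (a n.+1)%:~R + (P n)%:~R : R) (P n.+1 * a n.+1 + P n).
rewrite intrD intrM subrr normr0; lra.
Qed.

Arguments allpre : clear implicits.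

Lemma allNI n : NI n.
Proof. exact: (allpre n.+1 n (ltnSn n)). Qed.

Lemma Qge1 n : 1 <= Q n.+1.
Proof. by case: (Qge (allpre n)). Qed.
Lemma Qge0 n : 0 <= Q n.
Proof. by case: (Qge (allpre n)). Qed.

Lemma absE_D k : ((Q k.+1)%:~R * r k.+1 + (Q k)%:~R) * `|E k.+1| = 1.
Proof.
have hD : 0 <= ((Q k.+1)%:~R * r k.+1 + (Q k)%:~R : R).
  have := rem_ge0 k; have := Qge0 k.+1; have := Qge0 k.
  rewrite -!(ler0z R) => *; nra.
rewrite -(ger0_norm hD) -normrM E_det; last exact: allpre.
by rewrite -signr_odd; case: odd; rewrite ?expr0 ?expr1 ?mulrN1z ?normrN normr1.
Qed.

Lemma r_bound k : (Q k.+1)%:~R * `|E k.+1| * r k.+1 <= 1.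
Proof.
rewrite -[X in _ <= X](absE_D k).
have h0 : (0:R) <= (Q k)%:~R by rewrite ler0z; apply: Qge0.
have h1 : (0:R) <= `|E k.+1| by apply: normr_ge0.
have h2 := mulr_ge0 h0 h1.
rewrite mulrDl -mulrA [`|_| * _]mulrC mulrA; lra.
Qed.

Lemma semiconv_bound k (j : nat) : j%:Z <= a k.+1 ->
  (semiconv_den beta k j)%:~R *
    `|(semiconv_den beta k j)%:~R * beta - (j%:Z * P k.+1 + P k)%:~R| <= r k.+1.
Proof.
move=> hj.
set jr : R := (j%:Z)%:~R.
have hjr : jr <= r k.+1.
  have := floor_le (r k.+1); rewrite -/(cf_a beta k.+1).
  have : jr <= (a k.+1)%:~R by rewrite ler_int.
  lra.
have jp : 0 <= jr by rewrite /jr ler0z.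
have hrel := E_rel (allpre k.+1).
have -> : (semiconv_den beta k j)%:~R * beta - (j%:Z * P k.+1 + P k)%:~R
     = - (r k.+1 - jr) * E k.+1.
  transitivity (jr * E k.+1 + E k).
    by rewrite /semiconv_den /E !intrD !intrM /jr; ring.
  by rewrite hrel /jr; ring.
have hD := absE_D k.
rewrite normrM normrN (ger0_norm (_ : 0 <= r k.+1 - jr)); last lra.
rewrite /semiconv_den intrD intrM -/jr.
set q1 := (Q k.+1)%:~R in hD *; set q0 := (Q k)%:~R in hD *.
set e := `|E k.+1| in hD *; set rr := r k.+1 in hD hjr *.
have q1p : 0 <= q1 by rewrite ler0z; apply: Qge0.
have q0p : 0 <= q0 by rewrite ler0z; apply: Qge0.
have ep : 0 <= e by apply: normr_ge0.
have h1 : (jr * q1 + q0) <= rr * q1 + q0 by nra.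
have h2 : 0 <= (rr - jr) * e by nra.
have h3 : (jr * q1 + q0) * ((rr - jr) * e) <= (rr * q1 + q0) * ((rr - jr) * e).
  by apply: ler_wpM2r.
have h4 : (rr * q1 + q0) * ((rr - jr) * e) = rr - jr.
  by rewrite -[RHS]mulr1 -hD; ring.
lra.
Qed.


Lemma Qlow n : n%:Z <= Q n.+1.
Proof.
suff : n%:Z <= Q n.+1 /\ n.+1%:Z <= Q n.+2 by case.
elim: n => [|n [IH1 IH2]]; first by split => //; have := Qge1 1.
split => //.
change (n.+2%:Z <= a n.+2 * Q n.+2 + Q n.+1).
have := a_ge1 (allNI n.+1); have := Qge1 n; nia.
Qed.

Lemma transition (f : nat -> bool) N : f 1%N -> ~~ f N.+1 ->
  exists n, [/\ (1 <= n)%N, f n & ~~ f n.+1].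
Proof.
move=> f1; elim: N => [|N IH] hN; first by rewrite f1 in hN.
case hf : (f N.+1); last by apply: IH; rewrite hf.
by exists N.+1; split.
Qed.

Lemma legendre (q c : nat) : (0 < q)%N -> coprime q c ->
  2 * q%:R * `|q%:R * beta - c%:R| < 1 ->
  exists n, (1 <= n)%N /\ Q n = q%:Z.
Proof.
move=> q0 cop hlt.
have hf1 : Q 1 <= q%:Z by rewrite lez_nat.
have hf2 : ~~ (Q q.+2 <= q%:Z) by rewrite -ltNge; have := Qlow q.+1; lia.
have [n [n1 f1 f2]] := @transition (fun n => Q n <= q%:Z) q.+1 hf1 hf2.
exists n; split => //.
have hQ0 := Qge0 n; have hQ1 := Qge1 n.
rewrite -ltNge in f2.
set d := Q n.+1 * P n - P n.+1 * Q n.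
have dd : d * d = 1 by rewrite /d det -exprD -signr_odd oddD addbb.
set X := c%:Z * Q n - P n * q%:Z.
set x := - d * X.
set y := d * (c%:Z * Q n.+1 - q%:Z * P n.+1).
have hc : c%:Z = x * P n.+1 + y * P n.
  have : x * P n.+1 + y * P n = c%:Z * (d * d) by rewrite /x /y /X /d; ring.
  by rewrite dd mulr1.
have hq : q%:Z = x * Q n.+1 + y * Q n.
  have : x * Q n.+1 + y * Q n = q%:Z * (d * d) by rewrite /x /y /X /d; ring.
  by rewrite dd mulr1.
have hX : X = - d * x.
  by rewrite /x mulrA mulNr mulrN dd opprK mul1r.
have hxy : (1 <= y /\ x <= 0) \/ (y <= -1 /\ 0 <= x).
  have hq0 : 0 < q%:Z by rewrite ltz_nat.
  clearbody x y.
  case: (ltrgtP y 0) => hy; [right | left | ]; last first.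
  - exfalso; move: hq; rewrite hy mul0r addr0 => hq.
    case: (lerP x 0) => hx; nia.
  - split; first lia. case: (lerP x 0) => hx //; nia.
  - split; first lia. case: (lerP 0 x) => hx //; nia.
have hrel := E_rel (allpre n.+1).
set rr := r n.+1 in hrel.
have rr1 : 1 < rr by apply: rem_gt1; apply: allNI.
set e := (q%:Z)%:~R * beta - (c%:Z)%:~R.
have he : e = ((x%:~R : R) - y%:~R * rr) * E n.+1.
  transitivity ((x%:~R : R) * E n.+1 + y%:~R * E n).
    by rewrite /e hc hq /E !intrD !intrM; ring.
  by rewrite hrel; ring.
have hxr : rr <= `|(x%:~R : R) - y%:~R * rr|.
  case: hxy => [[h1 h2]|[h1 h2]].
  - have h1' : (1 : R) <= y%:~R by rewrite ler1z.
    have h2' : (x%:~R : R) <= 0 by rewrite -(mulr0z (1:R)) ler_int.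
    rewrite ler0_norm; nra.
  - have h1' : (y%:~R : R) <= -1 by rewrite -mulrN1z ler_int.
    have h2' : (0 : R) <= x%:~R by rewrite ler0z.
    rewrite ger0_norm; nra.
have hEn : `|E n| <= `|e|.
  rewrite hrel he !normrM normrN (gtr0_norm (_ : 0 < rr)); last lra.
  apply: ler_wpM2r => //; exact: normr_ge0.
have hXr : (X%:~R : R) = - (Q n)%:~R * e + (q%:Z)%:~R * E n.
  by rewrite /X /e /E intrD intrM intrN intrM; ring.
have hXlt : `|(X%:~R : R)| < 1.
  rewrite hXr.
  have hqR : (Q n)%:~R <= ((q%:Z)%:~R : R) by rewrite ler_int.
  have hQR : (0 : R) <= (Q n)%:~R by rewrite ler0z.
  have hlt' : 2 * ((q%:Z)%:~R : R) * `|e| < 1 := hlt.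
  have := ler_normD (- (Q n)%:~R * e) ((q%:Z)%:~R * E n).
  rewrite !normrM normrN (ger0_norm hQR) (ger0_norm (_ : 0 <= (q%:Z)%:~R)); last first.
    by rewrite ler0z.
  have := normr_ge0 e; have := normr_ge0 (E n).
  nra.
have X0 : X = 0.
  have h : `|X| < 1 by rewrite -(ltr_int R) intr_norm mulr1z.
  apply/eqP; rewrite -normr_eq0; move: h (normr_ge0 X); lia.
have x0 : x = 0.
  move: X0; rewrite hX => /eqP; rewrite mulf_eq0 oppr_eq0 => /orP[/eqP d0|/eqP //].
  by move: dd; rewrite d0 mul0r.
clearbody x y.
move: hc hq; rewrite x0 !mul0r !add0r => hc hq.
have ypos : 0 < y by case: hxy => [[h1 _]|[h1 _]]; [lia | nia].
have hy1 : `|y|%N = 1%N.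
  have hdq : (`|y|%N %| q)%N.
    by rewrite -[q]/(`|q%:Z|%N) hq abszM; apply: dvdn_mulr.
  have hdc : (`|y|%N %| c)%N.
    by rewrite -[c]/(`|c%:Z|%N) hc abszM; apply: dvdn_mulr.
  have : (`|y|%N %| gcdn q c)%N by rewrite dvdn_gcd hdq hdc.
  by rewrite (eqP cop) dvdn1 => /eqP.
have y1 : y = 1 by move: hy1; lia.
by rewrite hq y1 mul1r.
Qed.

End CFT.

Section Padic.
Variable R : realType.
Variable p : nat.
Hypothesis pp : prime p.

Lemma p_gt1 : (1 < p)%N. Proof. exact: prime_gt1. Qed.

Lemma padicE q : @padic_abs R p q = ((p ^ logn p q)%:R)^-1.
Proof. by rewrite /padic_abs natrX. Qed.

Lemma pexp_gt0 k : (0 : R) < (p ^ k)%:R.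
Proof. by rewrite ltr0n expn_gt0 prime_gt0. Qed.

Lemma padic_gt0 q : 0 < @padic_abs R p q.
Proof. by rewrite padicE invr_gt0 pexp_gt0. Qed.

Lemma padic_le1 q : @padic_abs R p q <= 1.
Proof.
rewrite padicE invf_le1 ?pexp_gt0 // ler1n expn_gt0 prime_gt0 //.
Qed.

Lemma padic_mulp l q : (0 < q)%N ->
  (p ^ l * q)%:R * @padic_abs R p (p ^ l * q) = q%:R * @padic_abs R p q.
Proof.
move=> q0; rewrite !padicE lognM ?expn_gt0 ?(prime_gt0 pp) //.
rewrite (pfactorK l pp).
rewrite expnD !natrM invfM; have := pexp_gt0 l; move=> h.
have h0 : ((p ^ l)%:R : R) != 0 by rewrite gt_eqF.
by rewrite mulrACA mulfV // mul1r.
Qed.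

Lemma padic_dvd m q : (0 < q)%N -> (p ^ m %| q)%N ->
  @padic_abs R p q <= ((p ^ m)%:R)^-1.
Proof.
move=> q0; rewrite pfactor_dvdn // => hm.
rewrite padicE lef_pV2 ?posrE ?pexp_gt0 // ler_nat leq_exp2l //; exact: p_gt1.
Qed.

End Padic.

Section InfImg.
Variable R : realType.
Variable f : nat -> R.
Hypothesis f0 : forall q, 0 <= f q.
Let S := [set f q | q in [set q : nat | (0 < q)%N]].

Lemma S_lb : has_lbound S.
Proof. by exists 0 => y [q _ <-]. Qed.

Lemma S_ne : S !=set0.
Proof. by exists (f 1%N); exists 1%N. Qed.

Lemma infS_le q : (0 < q)%N -> inf S <= f q.
Proof. by move=> q0; apply: (ge_inf S_lb); exists q. Qed.

Lemma infS_ge0 : 0 <= inf S.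
Proof. by apply: lb_le_inf; [exact: S_ne | move=> y [q _ <-]]. Qed.

Lemma infS_adh e : 0 < e -> exists q, (0 < q)%N /\ f q < inf S + e.
Proof.
move=> e0; have [y [q q0 <-] hy] := inf_adherent e0 (conj S_ne S_lb).
by exists q.
Qed.
End InfImg.

Section Main.
Variable R : realType.
Variable p : nat.
Hypothesis pp : prime p.
Variable alpha : R.

Let f (q : nat) : R := q%:R * @padic_abs R p q * dist_int (q%:R * alpha).
Lemma f0 q : 0 <= f q.
Proof. rewrite /f mulr_ge0 ?dist_ge0 // mulr_ge0 ?ler0n // ltW //; exact: padic_gt0. Qed.

Lemma mp_ge0 : 0 <= m_p p alpha.
Proof. exact: (infS_ge0 f0). Qed.
Lemma mp_le q : (0 < q)%N -> m_p p alpha <= f q.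
Proof. exact: (infS_le f0). Qed.

Lemma shift_lb (l : nat) (c : R) : (forall q, (0 < q)%N -> c <= f q) ->
  forall q, (0 < q)%N -> c <= q%:R * @padic_abs R p q * dist_int (q%:R * ((p ^ l)%:R * alpha)).
Proof.
move=> h q q0; have := h (p ^ l * q)%N; rewrite muln_gt0 expn_gt0 prime_gt0 //= q0.
move=> /(_ isT); rewrite /f padic_mulp // natrM.
move=> H; have -> : q%:R * ((p ^ l)%:R * alpha) = (p ^ l)%:R * q%:R * alpha by ring.
exact: H.
Qed.

Lemma dirA : (exists l : nat -> nat, forall m : nat, (0 < m)%N ->
     ~ infinite_loop (p ^ m) ((p ^ l m)%:R * alpha)) -> m_p p alpha = 0.
Proof.
move=> [l hl].
apply/eqP; rewrite eq_le mp_ge0 andbT leNgt; apply/negP => cpos.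
set c := m_p p alpha in cpos.
have hlb : forall q, (0 < q)%N -> c <= f q by move=> q; apply: mp_le.
set m := (Num.truncn ((c * c)^-1)).+1.
have hm : (1 : R) < c * c * (p ^ m)%:R.
  have h1 := truncnS_gt ((c * c)^-1).
  have h2 : (m < p ^ m)%N by apply: ltn_expl; exact: prime_gt1.
  have h3 : (m%:R : R) < (p ^ m)%:R by rewrite ltr_nat.
  have cc : 0 < c * c by apply: mulr_gt0.
  rewrite -/m in h1.
  have : (c * c)^-1 < (p ^ m)%:R by lra.
  rewrite -(ltr_pM2l cc) mulfV ?gt_eqF //.
apply: (hl m isT) => k j hj hkj hdiv.
set beta := (p ^ l m)%:R * alpha in hdiv hj.
have hblb := shift_lb (l m) hlb.
have Hb : forall q : nat, (0 < q)%N -> 0 < dist_int (q%:R * beta).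
  move=> q q0; rewrite lt_neqAle dist_ge0 andbT; apply/eqP => h0.
  by move: (hblb q q0); rewrite -/beta -h0 mulr0; lra.
have hQ1 := Qge1 Hb k; have hQ0 := Qge0 Hb k.
have hqz : 1 <= semiconv_den beta k j.
  rewrite /semiconv_den; clear hdiv; case: j hj hkj => [|j] hj hkj.
    case: k hkj hQ1 hQ0 hj => [//|k] _ hQ1 hQ0 _.
    have := Qge1 Hb k; lia.
  nia.
case hqe : (semiconv_den beta k j) hqz => [q|q] // hq1.
have q0 : (0 < q)%N by move: hq1; rewrite lez_nat.
have hdq : (p ^ m %| q)%N by move: hdiv; rewrite hqe dvdzE.
have b1 := hblb q q0; rewrite -/beta in b1.
have b1' : c <= q%:R * ((p ^ m)%:R)^-1 * dist_int (q%:R * beta).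
  apply: (le_trans b1); apply: ler_wpM2r; first exact: dist_ge0.
  by apply: ler_wpM2l => //; apply: padic_dvd.
have b2 := dist_le (q%:R * beta) (j%:Z * cf_ps beta k.+1 + cf_ps beta k).
have b3 := semiconv_bound Hb hj; rewrite hqe in b3.
have b4 : c * cf_rem beta k.+1 <= 1.
  have hr := r_bound Hb k.
  case hQe : (cf_qs beta k.+1) hQ1 hr => [Qn|Qn] // hQn hr.
  have Qn0 : (0 < Qn)%N by move: hQn; rewrite lez_nat.
  have := hblb Qn Qn0; rewrite -/beta => hc.
  have hd := dist_le (Qn%:R * beta) (cf_ps beta k.+1).
  have : c <= Qn%:R * `|E beta k.+1|.
    apply: (le_trans hc); rewrite /E hQe.
    have := padic_le1 R pp Qn; have := padic_gt0 R pp Qn; have := dist_ge0 (Qn%:R * beta).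
    have : (0 : R) <= Qn%:R by [].
    rewrite -[((Posz Qn)%:~R : R)]/(Qn%:R) => h1 h2 h3 h4.
    rewrite -mulrA; apply: ler_wpM2l => //; apply: (le_trans _ hd).
    by rewrite -[X in _ <= X]mul1r; apply: ler_wpM2r.
  have := rem_ge0 beta k; have := normr_ge0 (E beta k.+1).
  rewrite -[((Posz Qn)%:~R : R)]/(Qn%:R) in hr; nra.
have hr0 := rem_ge0 beta k.
have pm := pexp_gt0 R pp m.
set r := cf_rem beta k.+1 in b3 b4 hr0.
set dd := dist_int (q%:R * beta) in b1' b2.
have b5 : q%:R * dd <= r.
  have b3' : q%:R * `|q%:R * beta - (j%:Z * cf_ps beta k.+1 + cf_ps beta k)%:~R| <= r := b3.
  apply: (le_trans _ b3'); rewrite ler_pM2l ?ltr0n //.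
have b6 : c <= ((p ^ m)%:R)^-1 * r.
  apply: (le_trans b1'); rewrite mulrAC mulrC ler_pM2l ?invr_gt0 //.
have b7 : c * c <= ((p ^ m)%:R)^-1.
  have : c * c <= ((p ^ m)%:R)^-1 * (c * r).
    rewrite mulrCA ler_pM2l //.
  move=> h; apply: (le_trans h); rewrite -[X in _ <= X]mulr1.
  by rewrite ler_pM2l ?invr_gt0.
move: b7; rewrite -(ler_pM2r pm) mulVf ?gt_eqF //; lra.
Qed.

End Main.

Section MainB.
Variable R : realType.
Variable p : nat.
Hypothesis pp : prime p.
Variable alpha : R.

Let f (q : nat) : R := q%:R * @padic_abs R p q * dist_int (q%:R * alpha).
Let g (q : nat) : R := q%:R * dist_int (q%:R * alpha).

Lemma fB0 q : 0 <= f q.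
Proof. rewrite /f mulr_ge0 ?dist_ge0 // mulr_ge0 ?ler0n // ltW //; exact: padic_gt0. Qed.
Lemma gB0 q : 0 <= g q.
Proof. by rewrite /g mulr_ge0 ?dist_ge0. Qed.

Lemma mp_adh e : 0 < e -> exists Q, (0 < Q)%N /\ f Q < m_p p alpha + e.
Proof. move=> e0; exact: (infS_adh fB0 e0). Qed.

Lemma dirB : Bad alpha -> 0 < alpha -> m_p p alpha = 0 ->
  exists l : nat -> nat, forall m : nat, (0 < m)%N ->
     ~ infinite_loop (p ^ m) ((p ^ l m)%:R * alpha).
Proof.
move=> hbad apos hmp.
set cB := inf [set g q | q in [set q : nat | (0 < q)%N]].
have cBpos : 0 < cB := hbad.
have hB : forall q, (0 < q)%N -> cB <= g q by move=> q; apply: (infS_le gB0).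
suff H : forall m, exists l, (0 < m)%N -> ~ infinite_loop (p ^ m) ((p ^ l)%:R * alpha).
  by have [lf hlf] := choice H; exists lf.
move=> m; case: (posnP m) => [-> | m0]; first by exists 0%N.
have pm := pexp_gt0 R pp m.
set mn := Num.min cB 1.
have mn0 : 0 < mn by rewrite lt_min cBpos ltr01.
have mnc : mn <= cB by rewrite ge_min lexx.
have mn1 : mn <= 1 by rewrite ge_min lexx orbT.
set eps := mn / (4 * (p ^ m)%:R).
have eps0 : 0 < eps by rewrite divr_gt0 // mulr_gt0.
have epsE : eps * (4 * (p ^ m)%:R) = mn by rewrite /eps mulfVK // gt_eqF // mulr_gt0.
have [Q [Q0 hQ]] := mp_adh eps0.
rewrite hmp add0r /f in hQ.
have Qa0 : 0 <= Q%:R * alpha by rewrite mulr_ge0 // ltW.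
have [a0 hd] := dist_eq Qa0.
set delta := dist_int (Q%:R * alpha) in hQ hd.
set G := gcdn Q a0.
have G0 : (0 < G)%N by rewrite gcdn_gt0 Q0.
set Q' := (Q %/ G)%N; set a' := (a0 %/ G)%N.
have hQG : Q = (Q' * G)%N by rewrite divnK // dvdn_gcdl.
have haG : a0 = (a' * G)%N by rewrite divnK // dvdn_gcdr.
have cop : coprime Q' a'.
  have h : (gcdn Q' a' * G == 1 * G)%N.
    by rewrite muln_gcdl -hQG -haG mul1n.
  by rewrite /coprime -(eqn_pmul2r G0).
have Q'0 : (0 < Q')%N by move: Q0; rewrite hQG muln_gt0 => /andP[].
set v := logn p Q'.
set u := (Q' %/ p ^ v)%N.
have hQ' : Q' = (u * p ^ v)%N by rewrite divnK // pfactor_dvdnn.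
have u0 : (0 < u)%N by move: Q'0; rewrite hQ' muln_gt0 => /andP[].
set L := logn p G.
have hGL : (p ^ L <= G)%N by apply: dvdn_leq => //; apply: pfactor_dvdnn.
have GR1 : (1 : R) <= G%:R by rewrite ler1n.
set eta := `|Q'%:R * alpha - a'%:R|.
have eta0 : 0 <= eta by apply: normr_ge0.
have hde : delta = G%:R * eta.
  rewrite hd /eta -[G%:R]ger0_norm ?ler0n // -normrM hQG haG !natrM; congr `|_|; ring.
have hetad : eta <= delta.
  rewrite hde -[X in X <= _]mul1r; apply: ler_wpM2r => //.
have hpad : u%:R <= Q%:R * @padic_abs R p Q.
  have pL := pexp_gt0 R pp L; have pv := pexp_gt0 R pp v.
  have -> : Q%:R * @padic_abs R p Q = u%:R * (G%:R / (p ^ L)%:R).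
    rewrite padicE hQG lognM // -/v -/L expnD !natrM hQ' natrM.
    field; apply/andP; split; rewrite gt_eqF //.
  rewrite -[X in X <= _]mulr1 ler_pM2l ?ltr0n // ler_pdivlMr // mul1r ler_nat //.
have hud : u%:R * delta < eps.
  apply: le_lt_trans hQ; apply: ler_wpM2r => //; exact: dist_ge0.
have hvm : (m < v)%N.
  have h1 := hB Q' Q'0.
  have h2 : dist_int (Q'%:R * alpha) <= eta := dist_le _ a'%:Z.
  have h3' : g Q' <= Q'%:R * delta.
    by rewrite /g ler_pM2l ?ltr0n //; exact: le_trans h2 hetad.
  have e : (Q'%:R : R) = (p ^ v)%:R * u%:R by rewrite {1}hQ' natrM mulrC.
  have h3 : g Q' <= (p ^ v)%:R * (u%:R * delta).
    by apply: (le_trans h3'); rewrite e -mulrA.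
  have h4 : cB < (p ^ v)%:R * eps.
    apply: le_lt_trans (le_trans h1 h3) _; rewrite ltr_pM2l //; exact: pexp_gt0.
  rewrite -(ltn_exp2l _ _ (prime_gt1 pp)) -(ltr_nat R).
  have h5 : cB * (4 * (p ^ m)%:R) < (p ^ v)%:R * mn.
    have p4 : 0 < 4 * (p ^ m)%:R :> R by rewrite mulr_gt0.
    by move: h4; rewrite -(ltr_pM2r p4) -mulrA epsE.
  have h6 : (p ^ v)%:R * mn <= (p ^ v)%:R * cB by rewrite ler_pM2l // pexp_gt0.
  have : cB * (4 * (p ^ m)%:R) < cB * (p ^ v)%:R by lra.
  rewrite ltr_pM2l //; lra.
set l := (v - m)%N.
exists l => _.
set beta := (p ^ l)%:R * alpha.
set q := (p ^ m * u)%N.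
have q0 : (0 < q)%N by rewrite muln_gt0 expn_gt0 prime_gt0.
have hqb : q%:R * beta = Q'%:R * alpha.
  have ev : v = (m + l)%N by rewrite /l subnKC // ltnW.
  rewrite /beta /q hQ' ev expnD !natrM; ring.
have Hb : forall q0 : nat, (0 < q0)%N -> 0 < dist_int (q0%:R * beta).
  move=> r r0; rewrite lt_neqAle dist_ge0 andbT; apply/eqP => h0.
  have := hB (p ^ l * r)%N; rewrite muln_gt0 expn_gt0 prime_gt0 //= r0 => /(_ isT).
  have e : ((p ^ l * r)%N%:R * alpha : R) = r%:R * beta by rewrite /beta natrM; ring.
  rewrite /g e -h0 mulr0; lra.
have hcop : coprime q a'.
  apply: coprime_dvdl cop; rewrite hQ' /q mulnC dvdn_mul //.
  by rewrite dvdn_exp2l // ltnW.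
have hleg : 2 * q%:R * `|q%:R * beta - a'%:R| < 1.
  rewrite hqb -/eta /q natrM.
  have : (p ^ m)%:R * (u%:R * eta) <= (p ^ m)%:R * (u%:R * delta).
    rewrite ler_pM2l //; apply: ler_wpM2l => //.
  have : (p ^ m)%:R * (u%:R * delta) < (p ^ m)%:R * eps by rewrite ltr_pM2l.
  have : (p ^ m)%:R * eps * 4 = mn by rewrite -epsE; ring.
  lra.
have [n [n1 hn]] := legendre Hb q0 hcop hleg.
move=> H; apply: (H n 0%N (a_ge0 beta n)).
  by case: n n1 {hn}.
rewrite /semiconv_den mul0r add0r hn dvdzE /=.
by rewrite /q dvdn_mulr.
Qed.

End MainB.

Unset Implicit Arguments.

Theorem theorem3p1 (R : realType) (p : nat) (alpha : R) :
  prime p -> Bad alpha -> 0 < alpha ->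
  (m_p p alpha = 0 <->
   exists l : nat -> nat, forall m : nat, (0 < m)%N ->
     ~ infinite_loop (p ^ m) ((p ^ l m)%:R * alpha)).
Proof.
move=> pp hbad apos; split; first exact: dirB.
exact: dirA.
Qed.
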